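(* Let $D([0,1],\mathbb{C})$ be the space of càdlàg functions from $[0,1]$ to $\mathbb{C}$. Suppose $f_n\in D([0,1],\mathbb{C})$ converge uniformly to $f\in C([0,1],\mathbb{C})$. Then for every fixed $z\in\mathbb{C}$ with $|z|=1$ and $z\neq1$, $$\lim_{n\to\infty}\int_0^1f_n(t)\,z^{\lfloor nt\rfloor}\,dt=0.$$ *)

(* Defs.v *)
From Stdlib Require Import Reals ZArith.
From Coquelicot Require Import Coquelicot.
Open Scope R_scope.

(* A function f : R -> C, considered on [0,1].  Only its values on [0,1] matter. *)

Definition cadlag01 (f : R -> C) : Prop :=
  (forall t, 0 <= t < 1 -> filterlim f (at_right t) (locally (f t))) /\
  (forall t, 0 < t <= 1 -> exists l : C, filterlim f (at_left t) (locally l)).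

Definition continuous01 (f : R -> C) : Prop :=
  forall t, 0 <= t <= 1 ->
    filterlim f (within (fun s => 0 <= s <= 1) (locally t)) (locally (f t)).

Definition unif_conv01 (fn : nat -> R -> C) (f : R -> C) : Prop :=
  forall eps : R, 0 < eps -> exists N : nat, forall n : nat, (N <= n)%nat ->
    forall t, 0 <= t <= 1 -> Cmod (fn n t - f t)%C < eps.

(* floor(n t) as a natural number (t >= 0 in all uses); Int_part is the floor. *)
Definition floor_nat (x : R) : nat := Z.to_nat (Int_part x).

Definition integrand (fn : nat -> R -> C) (z : C) (n : nat) (t : R) : C :=
  (fn n t * pow_n z (floor_nat (INR n * t)))%C.

(* Main.v *)
Require Import Defs.
From Stdlib Require Import Reals ZArith Lia Lra.
From Coquelicot Require Import Coquelicot.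
Open Scope R_scope.

Lemma RInt_nonex (f : R -> C) a b :
  ~ ex_RInt (V := C_R_CompleteNormedModule) f a b ->
  RInt (V := C_R_CompleteNormedModule) f a b = RtoC 0.
Proof.
  intros Hn.
  assert (Hl : forall E : R -> Prop, (forall x, E x) -> real (Lub_Rbar E) = 0).
  { intros E HE. rewrite (is_lub_Rbar_unique E p_infty); [reflexivity|].
    split. intros x _; exact I.
    intros [r| |] Hb; simpl; auto.
    - specialize (Hb (r+1) (HE _)). simpl in Hb. lra.
    - specialize (Hb 0 (HE _)). exact Hb. }
  unfold RInt, iota. change (C_complete_lim (fun A : C -> Prop => forall x : C, is_RInt f a b x -> A x) = RtoC 0).
  unfold C_complete_lim, R_complete_lim.
  rewrite !Hl; [reflexivity| |]; intros x y Hy; exfalso; apply Hn; exists y; exact Hy.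
Qed.

Lemma Cmod_pow_n (z : C) k : Cmod z = 1 -> Cmod (pow_n z k) = 1.
Proof.
  intros Hz; induction k; simpl.
  - apply Cmod_1.
  - change (Cmod (z * pow_n z k)%C = 1). rewrite Cmod_mult, Hz, IHk. ring.
Qed.

Lemma floor_nat_S x : 0 <= x -> floor_nat (x + 1) = S (floor_nat x).
Proof.
  intros Hx. unfold floor_nat.
  destruct (base_Int_part x) as [H1 H2].
  assert (Hp : (0 <= Int_part x)%Z).
  { apply le_IZR. (* IZR > x - 1 > -1 *)
    assert (-1 < IZR (Int_part x)) by lra.
    apply lt_IZR in H. simpl in H. apply IZR_le. lia. }
  assert (E : Int_part (x + 1) = (Int_part x + 1)%Z).
  { symmetry. apply Int_part_spec. rewrite plus_IZR. simpl. lra. }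
  rewrite E. rewrite Z2Nat.inj_add by lia. simpl. lia.
Qed.

Lemma is_RInt_Cmult (g : R -> C) (z : C) a b l :
  is_RInt (V := C_R_NormedModule) g a b l ->
  is_RInt (V := C_R_NormedModule) (fun t => (z * g t)%C) a b (z * l)%C.
Proof.
  intros H.
  change (is_RInt (V := prod_NormedModule R_AbsRing R_NormedModule R_NormedModule) g a b l) in H.
  pose proof (is_RInt_fct_extend_fst _ _ _ _ H) as H1.
  pose proof (is_RInt_fct_extend_snd _ _ _ _ H) as H2.
  change (is_RInt (V := prod_NormedModule R_AbsRing R_NormedModule R_NormedModule) (fun t => (z * g t)%C) a b (z * l)%C).
  destruct z as [x y]. destruct l as [l1 l2].
  apply is_RInt_fct_extend_pair; simpl.
  - eapply is_RInt_ext; [| apply (is_RInt_minus _ _ _ _ _ _ (is_RInt_scal _ _ _ x _ H1) (is_RInt_scal _ _ _ y _ H2))].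
    intros t _. reflexivity.
  - eapply is_RInt_ext; [| apply (is_RInt_plus _ _ _ _ _ _ (is_RInt_scal _ _ _ x _ H2) (is_RInt_scal _ _ _ y _ H1))].
    intros t _. reflexivity.
Qed.

Definition clamp (x : R) := Rmax 0 (Rmin 1 x).

Lemma clamp_in x : 0 <= clamp x <= 1.
Proof. unfold clamp, Rmax, Rmin; repeat destruct Rle_dec; lra. Qed.
Lemma clamp_id x : 0 <= x <= 1 -> clamp x = x.
Proof. intros; unfold clamp, Rmax, Rmin; repeat destruct Rle_dec; lra. Qed.
Lemma clamp_lip x y : Rabs (clamp y - clamp x) <= Rabs (y - x).
Proof. unfold clamp, Rmax, Rmin; repeat destruct Rle_dec; unfold Rabs; repeat destruct Rcase_abs; lra. Qed.

Lemma unif_cont01 (f : R -> C) : continuous01 f ->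
  forall eps, 0 < eps -> exists delta, 0 < delta /\
   forall s t, 0 <= s <= 1 -> 0 <= t <= 1 -> Rabs (s - t) < delta -> Cmod (f s - f t)%C < eps.
Proof.
  intros Hc eps Heps.
  assert (Hcont : forall x, 0 <= x <= 1 -> @continuous R_UniformSpace C_UniformSpace (fun y => f (clamp y)) x).
  { intros x Hx. unfold continuous. rewrite (clamp_id x Hx).
    eapply filterlim_comp; [| apply (Hc x Hx)].
    intros A [e He]. unfold filtermap, locally. exists e. intros y Hy. apply He.
    - unfold ball in *; simpl in *; unfold AbsRing_ball in *. unfold abs, minus, plus, opp in *; simpl in *.
      pose proof (clamp_lip x y). rewrite (clamp_id x Hx) in H. unfold Rminus in H. lra.
    - apply clamp_in. }
  destruct (@unifcont_normed_1d R_AbsRing C_R_NormedModule _ 0 1 Hcont (mkposreal eps Heps)) as [d Hd].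
  exists d. split; [apply cond_pos|]. intros s t Hs Ht Hst.
  specialize (Hd t s Ht Hs). rewrite (clamp_id s Hs), (clamp_id t Ht) in Hd.
  assert (B : ball t d s).
  { unfold ball; simpl; unfold AbsRing_ball, abs, minus, plus, opp; simpl. exact Hst. }
  specialize (Hd B). unfold ball_norm in Hd. rewrite Cmod_norm. exact Hd.
Qed.

Theorem theorem13 (fn : nat -> R -> C) (f : R -> C) (z : C) :
  (forall n, cadlag01 (fn n)) ->
  continuous01 f ->
  unif_conv01 fn f ->
  Cmod z = 1 -> z <> RtoC 1 ->
  filterlim (fun n : nat => RInt (V := C_R_CompleteNormedModule) (integrand fn z n) 0 1)
    eventually (locally (RtoC 0)).
Proof.
  intros Hcad Hf Hu Hz Hz1.
  set (c := Cmod (z - 1)%C).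
  assert (Hc : 0 < c).
  { apply Cmod_gt_0. intros E. apply Hz1. 
    replace z with ((z - 1) + 1)%C by ring. rewrite E. ring. }
  apply filterlim_locally. intros [eps Heps]. simpl.
  set (e := c * eps / 4).
  assert (He : 0 < e) by (unfold e; nra).
  set (e' := Rmin (e/3) 1).
  assert (He' : 0 < e') by (unfold e', Rmin; destruct Rle_dec; lra).
  assert (He'1 : e' <= e/3) by (unfold e', Rmin; destruct Rle_dec; lra).
  assert (He'2 : e' <= 1) by (unfold e', Rmin; destruct Rle_dec; lra).
  destruct (unif_cont01 f Hf e' He') as [dl [Hdl Hom]].
  destruct (Hu e' He') as [N1 HN1].
  set (K := Cmod (f 0) + Cmod (f 1)).
  assert (HK : 0 <= K) by (unfold K; pose proof (Cmod_ge_0 (f 0)); pose proof (Cmod_ge_0 (f 1)); lra).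
  destruct (INR_unbounded (Rmax (/dl) ((K+4)/e))) as [N2 HN2].
  exists (max (max N1 N2) 1). intros n Hn.
  assert (Hn1 : (N1 <= n)%nat) by lia.
  assert (Hn2 : INR N2 <= INR n) by (apply le_INR; lia).
  assert (Hn0 : 1 <= INR n) by (change 1 with (INR 1); apply le_INR; lia).
  set (d := / INR n).
  assert (Hdn : d * INR n = 1) by (unfold d; field; lra).
  assert (Hd0 : 0 < d) by (unfold d; apply Rinv_0_lt_compat; lra).
  assert (Hd1 : d <= 1) by nra.
  assert (Hmx1 : / dl <= Rmax (/dl) ((K+4)/e)) by apply Rmax_l.
  assert (Hmx2 : (K+4)/e <= Rmax (/dl) ((K+4)/e)) by apply Rmax_r.
  assert (Hddl : d < dl).
  { assert (Hw : / dl * dl = 1) by (field; lra).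
    assert (/ dl < INR n) by lra. nra. }
  assert (HdK : d * (K + 4) < e).
  { assert (Hw : (K+4)/e * e = K + 4) by (field; lra).
    assert ((K+4)/e < INR n) by lra. nra. }
  assert (Main : Cmod (RInt (V := C_R_CompleteNormedModule) (integrand fn z n) 0 1) < eps).
  { destruct (Classical_Prop.classic (ex_RInt (V:=C_R_CompleteNormedModule) (integrand fn z n) 0 1)) as [Hex|Hnex];
      [| rewrite RInt_nonex by exact Hnex; rewrite Cmod_0; lra].
    set (L := RInt (V := C_R_CompleteNormedModule) (integrand fn z n) 0 1).
    assert (HL : is_RInt (V:=C_R_NormedModule) (integrand fn z n) 0 1 L) by (apply (RInt_correct (V:=C_R_CompleteNormedModule)); exact Hex).
    set (h := fun t => pow_n z (floor_nat (INR n * t))).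
    assert (Hh : forall t, Cmod (h t) = 1) by (intros t; apply Cmod_pow_n; exact Hz).
    set (G := fun s => (fn n (s - d)%R * h s)%C).
    assert (HzL : is_RInt (V:=C_R_NormedModule) (fun t => G (t + d)) 0 1 (z * L)%C).
    { eapply is_RInt_ext; [| apply is_RInt_Cmult; exact HL]. intros t Ht.
      rewrite Rmin_left, Rmax_right in Ht by lra. unfold G, h, integrand.
      replace (t + d - d) with t by ring.
      replace (INR n * (t + d)) with (INR n * t + 1)
        by (rewrite Rmult_plus_distr_l, (Rmult_comm (INR n) d), Hdn; ring).
      rewrite floor_nat_S by nra.
      change (pow_n z (S (floor_nat (INR n * t)))) with (z * pow_n z (floor_nat (INR n * t)))%C.
      match goal with |- ?a = ?b => change (@eq C a b) end; ring. }
    assert (HG : is_RInt (V:=C_R_NormedModule) G d (1 + d) (z * L)%C).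
    { pose proof (@is_RInt_comp_lin C_R_NormedModule (fun t => G (t + d)) 1 (-d) d (1 + d) (z*L)%C) as P.
      replace (1 * d + - d) with 0 in P by ring. replace (1 * (1 + d) + - d) with 1 in P by ring.
      eapply is_RInt_ext; [| apply P; exact HzL].
      intros x _. cbv beta. replace (1 * x + - d + d) with x by ring. destruct (G x) as [u v]. apply injective_projections; simpl; unfold scal; simpl; unfold mult; simpl; ring. }
    assert (HexG : ex_RInt (V:=C_R_CompleteNormedModule) G d (1 + d)) by (exists (z * L)%C; exact HG).
    assert (HexG1 : ex_RInt (V:=C_R_CompleteNormedModule) G d 1)
      by (apply (@ex_RInt_Chasles_1 C_R_CompleteNormedModule G d 1 (1 + d)); [lra| exact HexG]).
    assert (HexG2 : ex_RInt (V:=C_R_CompleteNormedModule) G 1 (1 + d))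
      by (apply (@ex_RInt_Chasles_2 C_R_CompleteNormedModule G d 1 (1 + d)); [lra| exact HexG]).
    assert (Hexg1 : ex_RInt (V:=C_R_CompleteNormedModule) (integrand fn z n) 0 d)
      by (apply (@ex_RInt_Chasles_1 C_R_CompleteNormedModule _ 0 d 1); [lra| exact Hex]).
    assert (Hexg2 : ex_RInt (V:=C_R_CompleteNormedModule) (integrand fn z n) d 1)
      by (apply (@ex_RInt_Chasles_2 C_R_CompleteNormedModule _ 0 d 1); [lra| exact Hex]).
    set (A1 := RInt (V:=C_R_CompleteNormedModule) G d 1).
    set (A2 := RInt (V:=C_R_CompleteNormedModule) G 1 (1 + d)).
    set (B1 := RInt (V:=C_R_CompleteNormedModule) (integrand fn z n) 0 d).
    set (B2 := RInt (V:=C_R_CompleteNormedModule) (integrand fn z n) d 1).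
    assert (EA : plus A1 A2 = (z * L)%C).
    { unfold A1, A2. rewrite RInt_Chasles by assumption. apply is_RInt_unique. exact HG. }
    assert (EB : plus B1 B2 = L).
    { unfold B1, B2. rewrite RInt_Chasles by assumption. reflexivity. }
    assert (HA1 : is_RInt (V:=C_R_NormedModule) G d 1 A1) by (apply (RInt_correct (V:=C_R_CompleteNormedModule)); exact HexG1).
    assert (HA2 : is_RInt (V:=C_R_NormedModule) G 1 (1 + d) A2) by (apply (RInt_correct (V:=C_R_CompleteNormedModule)); exact HexG2).
    assert (HB1 : is_RInt (V:=C_R_NormedModule) (integrand fn z n) 0 d B1) by (apply (RInt_correct (V:=C_R_CompleteNormedModule)); exact Hexg1).
    assert (HB2 : is_RInt (V:=C_R_NormedModule) (integrand fn z n) d 1 B2) by (apply (RInt_correct (V:=C_R_CompleteNormedModule)); exact Hexg2).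
    assert (Hfn3 : forall s t, 0 <= s <= 1 -> 0 <= t <= 1 -> Rabs (s - t) < dl ->
               Cmod (fn n s - fn n t)%C <= 3 * e').
    { intros s t Hs Ht Hst.
      replace (fn n s - fn n t)%C with ((fn n s - f s) + (f s - f t) - (fn n t - f t))%C by ring.
      unfold Cminus at 1. eapply Rle_trans; [apply Cmod_triangle|]. rewrite Cmod_opp.
      eapply Rle_trans; [apply Rplus_le_compat_r; apply Cmod_triangle|].
      pose proof (HN1 n Hn1 s Hs). pose proof (HN1 n Hn1 t Ht). pose proof (Hom s t Hs Ht Hst). lra. }
    assert (Hfn2 : forall s a, 0 <= s <= 1 -> 0 <= a <= 1 -> Rabs (s - a) < dl ->
               Cmod (fn n s) <= Cmod (f a) + 2).
    { intros s a Hs Ha Hsa.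
      replace (fn n s) with ((fn n s - f s) + (f s - f a) + f a)%C by ring.
      eapply Rle_trans; [apply Cmod_triangle|].
      eapply Rle_trans; [apply Rplus_le_compat_r; apply Cmod_triangle|].
      pose proof (HN1 n Hn1 s Hs). pose proof (Hom s a Hs Ha Hsa). lra. }
    assert (HD : is_RInt (V:=C_R_NormedModule) (fun t => (G t - integrand fn z n t)%C) d 1 (A1 - B2)%C).
    { exact (is_RInt_minus (V:=C_R_NormedModule) _ _ _ _ _ _ HA1 HB2). }
    assert (PD : forall x, d <= x <= 1 -> @norm R_AbsRing C_R_NormedModule (G x - integrand fn z n x)%C <= 3 * e').
    { intros x Hx. rewrite <- Cmod_norm. unfold G, integrand.
      replace (fn n (x - d)%R * h x - fn n x * pow_n z (floor_nat (INR n * x)))%C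
          with ((fn n (x - d)%R - fn n x) * h x)%C by (unfold h; ring).
      rewrite Cmod_mult, Hh, Rmult_1_r. apply Hfn3; try lra.
      rewrite Rabs_left1 by lra. lra. }
    pose proof (norm_RInt_le_const (V:=C_R_NormedModule) _ d 1 _ _ ltac:(lra) PD HD) as BD.
    assert (PA : forall x, 1 <= x <= 1 + d -> @norm R_AbsRing C_R_NormedModule (G x) <= Cmod (f 1) + 2).
    { intros x Hx. rewrite <- Cmod_norm. unfold G. rewrite Cmod_mult, Hh, Rmult_1_r.
      apply Hfn2; try lra. rewrite Rabs_left1 by lra. lra. }
    pose proof (norm_RInt_le_const (V:=C_R_NormedModule) _ 1 (1 + d) _ _ ltac:(lra) PA HA2) as BA2.
    assert (PB : forall x, 0 <= x <= d -> @norm R_AbsRing C_R_NormedModule (integrand fn z n x) <= Cmod (f 0) + 2).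
    { intros x Hx. rewrite <- Cmod_norm. unfold integrand. rewrite Cmod_mult, Cmod_pow_n by exact Hz.
      rewrite Rmult_1_r. apply Hfn2; try lra. rewrite Rabs_right by lra. lra. }
    pose proof (norm_RInt_le_const (V:=C_R_NormedModule) _ 0 d _ _ ltac:(lra) PB HB1) as BB1.
    rewrite <- !Cmod_norm in BD, BA2, BB1.
    change (plus A1 A2) with (A1 + A2)%C in EA.
    change (plus B1 B2) with (B1 + B2)%C in EB.
    assert (Ealg : ((z - 1) * L)%C = ((A1 - B2) + A2 - B1)%C).
    { transitivity ((z * L) - L)%C; [ring|]. rewrite <- EA. rewrite <- EB. ring. }
    assert (Hle : c * Cmod L <= Cmod (A1 - B2) + Cmod A2 + Cmod B1).
    { unfold c. rewrite <- Cmod_mult, Ealg. unfold Cminus at 2.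
      eapply Rle_trans; [apply Cmod_triangle|]. rewrite Cmod_opp.
      eapply Rle_trans; [apply Rplus_le_compat_r; apply Cmod_triangle|]. apply Rle_refl. }
    unfold K in HdK.
    assert (X1 : (1 - d) * (3 * e') <= e) by nra.
    assert (X2 : e = c * eps / 4) by reflexivity.
    assert (X3 : c * Cmod L < c * eps) by lra.
    apply (Rmult_lt_reg_l c); assumption. }
  apply (@norm_compat1 R_AbsRing C_R_NormedModule).
  assert (E0 : forall w : C, @minus C_R_NormedModule w (RtoC 0) = w).
  { intros [a b]. apply injective_projections; simpl; unfold plus, opp, zero; simpl; ring. }
  rewrite E0. rewrite <- Cmod_norm. exact Main.
Qed.
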